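(* Let $f:D\to\{0,1\}$, $D\subseteq\{0,1\}^n$, be an $n$-bit partial Boolean function that depends on $n$ bits. Then $f$ can be computed exactly by a quantum 1-query algorithm if and only if either $n=1$, $D=\{0,1\}$ and $f(x)=x_1$ or $f(x)=1\oplus x_1$; or $n=2$, $D\subseteq\{0,1\}^2$ with $|D|\in\{3,4\}$, and $f(x)=x_1\oplus x_2$ or $f(x)=1\oplus x_1\oplus x_2$ for all $x\in D$.
   Context: An $n$-bit partial Boolean function is a map $f:D\to\{0,1\}$ with $D\subseteq\{0,1\}^n$. A multilinear polynomial $p$ in $x_1,\dots,x_n$ represents $f$ if $p(x)=f(x)$ for all $x\in D$. $f$ depends on $k$ bits if $k$ is the minimum, over all multilinear polynomials representing $f$, of the number of variables occurring in the polynomial. A quantum 1-query algorithm works in a finite-dimensional Hilbert space with orthonormal basis $\{|i,j'\rangle\}$, $i\in\{0,1,\dots,n\}$, $j'$ in a finite set; for input $x$ the oracle is $O_x|i,j'\rangle=(-1)^{x_i}|i,j'\rangle$ for $i\ge1$ and $O_x|0,j'\rangle=|0,j'\rangle$. The algorithm applies input-independent unitaries $U_0$, then $O_x$, then $U_1$ to an initial state $|\psi_0\rangle$ and performs a projective measurement with outcomes in $\{0,1\}$; it computes $f$ exactly if for every $x\in D$ the outcome is $f(x)$ with probability 1. *)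

(* Defs.v *)
From mathcomp Require Import all_boot all_algebra.
From mathcomp Require Import Rstruct.
From mathcomp.real_closed Require Import complex.
Set Implicit Arguments. Unset Strict Implicit. Unset Printing Implicit Defensive.
Import GRing.Theory Num.Theory.
Local Open Scope ring_scope.

Definition C : numClosedFieldType := Rdefinitions.R[i].
Definition RR : realFieldType := Rdefinitions.R.

(** Inputs x in {0,1}^n ; variable x_{k+1} is [x (k : 'I_n)]. *)
Notation bits n := {ffun 'I_n -> bool}.

(** [xb x k] is the bit x_{k+1} (0-based index k), false if k >= n. *)
Definition xb n (x : bits n) (k : nat) : bool :=
  if insub k is Some i then x i else false.

Definition mlpoly (n : nat) := {set 'I_n} -> RR.

Definition mleval n (p : mlpoly n) (x : bits n) : RR :=
  \sum_(S : {set 'I_n}) p S * \prod_(i in S) (x i)%:R.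

Definition represents n (D : {set bits n}) (f : bits n -> bool) (p : mlpoly n) : Prop :=
  forall x, x \in D -> mleval p x = (f x)%:R.

Definition mlvars n (p : mlpoly n) : {set 'I_n} :=
  [set i : 'I_n | [exists S : {set 'I_n}, (p S != 0) && (i \in S)]].

Definition depends_on_bits n (D : {set bits n}) (f : bits n -> bool) (k : nat) : Prop :=
  (exists p : mlpoly n, represents D f p /\ #|mlvars p| = k) /\
  (forall p : mlpoly n, represents D f p -> (k <= #|mlvars p|)%N).

(** ---- Quantum 1-query algorithms ----
    Hilbert space with orthonormal basis |i, j'>, i in {0..n}, j' in 'I_m. *)
Definition QIdx (n m : nat) : finType := ('I_n.+1 * 'I_m)%type.
Definition qdim (n m : nat) : nat := #|{: QIdx n m}|.

Definition adj (p q : nat) (M : 'M[C]_(p, q)) : 'M[C]_(q, p) := (map_mx Num.conj M)^T.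

Definition unitary d (U : 'M[C]_d) : Prop := U *m adj U = 1%:M.

Definition sqnorm d (v : 'cV[C]_d) : C := \sum_(k < d) `|v k 0| ^+ 2.

Definition proj_meas d (P0 P1 : 'M[C]_d) : Prop :=
  [/\ P0 + P1 = 1%:M, P0 *m P0 = P0, P1 *m P1 = P1, adj P0 = P0 & adj P1 = P1].

(** The oracle O_x |i,j'> = (-1)^{x_i} |i,j'> for i >= 1, and |0,j'> -> |0,j'>. *)
Definition oracle n m (x : bits n) : 'M[C]_(qdim n m) :=
  diag_mx (\row_(k < qdim n m)
     (if unlift ord0 (enum_val k : QIdx n m).1 is Some j then (-1) ^+ (x j) else 1)).

Definition exact_1query n (D : {set bits n}) (f : bits n -> bool) : Prop :=
  exists (m : nat) (psi0 : 'cV[C]_(qdim n m)) (U0 U1 P0 P1 : 'M[C]_(qdim n m)),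
    [/\ sqnorm psi0 = 1, unitary U0, unitary U1, proj_meas P0 P1 &
        forall x, x \in D ->
          sqnorm ((if f x then P1 else P0) *m (U1 *m (oracle m x *m (U0 *m psi0)))) = 1].

(* Main.v *)
Require Import Defs.
From mathcomp Require Import all_boot all_algebra.
From Stdlib Require Import Classical.
From mathcomp Require Import zify ring lra.
Set Implicit Arguments. Unset Strict Implicit. Unset Printing Implicit Defensive.
Import GRing.Theory Num.Theory.
Local Open Scope ring_scope.

Fixpoint qf (I : finType) (h : {set I} -> RR) (k : nat) (S : {set I}) : RR :=
  match k with 0 => 0 | k'.+1 => h S - \sum_(U : {set I} | U \proper S) qf h k' U end.

Lemma qf_stab (I : finType) (h : {set I} -> RR) k (S : {set I}) : (#|S| < k)%N -> qf h k S = qf h k.+1 S.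
Proof.
elim: k S => // k IH S hS; rewrite [qf h k.+1 S]/= [qf h k.+2 S]/=; congr (_ - _); apply: eq_bigr => U hU.
apply: IH; apply: leq_trans (proper_card hU) _; by [].
Qed.

Lemma qfS (I : finType) (h : {set I} -> RR) k (S : {set I}) : qf h k.+1 S = h S - \sum_(U : {set I} | U \proper S) qf h k U.
Proof. by []. Qed.

Lemma interp_ex (I : finType) (h : {set I} -> RR) : exists p : {set I} -> RR,
  forall X : {set I}, \sum_(T : {set I} | T \subset X) p T = h X.
Proof.
exists (qf h #|I|.+1) => X.
rewrite (bigD1 X) // {1}qfS.
have -> : \sum_(i : {set I} | (i \subset X) && (i != X)) qf h #|I|.+1 i =
          \sum_(U : {set I} | U \proper X) qf h #|I| U.
  apply: eq_big => [U|U]; first by rewrite properEneq andbC.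
  move=> hU; rewrite -qf_stab //.
  have hU' : U \proper X by rewrite properEneq andbC.
  apply: leq_trans (proper_card hU') _; exact: max_card.
exact: subrK.
Qed.

Lemma prod_bits n (x : bits n) (S : {set 'I_n}) :
  \prod_(i in S) ((x i)%:R : RR) = (S \subset [set i | x i])%:R.
Proof.
case: (boolP (S \subset _)) => hS.
  rewrite big1 // => i /(subsetP hS); rewrite inE => ->.
  by [].
move: hS => /subsetPn [i iS]; rewrite inE => /negbTE xi.
by rewrite (bigD1 i) //= xi mul0r.
Qed.

Lemma dep_pair n (D : {set bits n}) (f : bits n -> bool) :
  depends_on_bits D f n -> forall i : 'I_n,
  exists x y, [/\ x \in D, y \in D, (forall j, j != i -> x j = y j) & f x != f y].
Proof.
move=> [_ Hmin] i.
apply: NNPP => Hno.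
have Hsame : forall x y, x \in D -> y \in D -> (forall j, j != i -> x j = y j) -> f x = f y.
  move=> x y xD yD hxy; apply/eqP; case: (boolP (f x == f y)) => // hne; exfalso.
  by apply: Hno; exists x, y.
pose h (Y : {set 'I_n}) : RR :=
  if [pick y in D | [set j | y j] :\ i == Y] is Some y then (f y)%:R else 0.
have [p Hp] := interp_ex h.
pose p' (S : {set 'I_n}) := if i \in S then 0 else p S.
have Hrep : represents D f p'.
  move=> x xD; rewrite /mleval.
  under eq_bigr => S _ do rewrite prod_bits.
  pose Y := [set j | x j] :\ i.
  transitivity (\sum_(S : {set 'I_n}) if S \subset Y then p S else 0).
    apply: eq_bigr => S _; rewrite /p' /Y subsetD1.
    by case: (i \in S); case: (S \subset _); rewrite /= ?mulr1 ?mulr0.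
  rewrite -big_mkcond /= Hp /h.
  case: pickP => [y /andP [yD /eqP hy]|].
    rewrite (Hsame y x) // => j ji.
    have : (j \in [set j | y j] :\ i) = (j \in Y) by rewrite hy.
    by rewrite !inE ji.
  by move=> /(_ x); rewrite xD eqxx.
have := Hmin _ Hrep.
have : mlvars p' \subset [set~ i].
  apply/subsetP => j; rewrite !inE => /existsP [S /andP [hS jS]].
  apply/eqP => eji; move: hS; rewrite /p' -eji jS eqxx //.
move=> /subset_leq_card; rewrite cardsC1 card_ord => h1 h2.
have := leq_trans h2 h1; have := ltn_ord i; lia.
Qed.

Lemma adj_mul p q r (A : 'M[C]_(p, q)) (B : 'M[C]_(q, r)) :
  adj (A *m B) = adj B *m adj A.
Proof. by rewrite /adj map_mxM trmx_mul. Qed.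


Lemma sqnormE d (u : 'cV[C]_d) : sqnorm u = (adj u *m u) 0 0.
Proof.
rewrite /sqnorm !mxE; apply: eq_bigr => k _.
by rewrite /adj !mxE normCK mulrC.
Qed.

Lemma unitaryK d (U : 'M[C]_d) : unitary U -> adj U *m U = 1%:M.
Proof. exact: mulmx1C. Qed.

Lemma sqnorm0 d (u : 'cV[C]_d) : sqnorm u = 0 -> u = 0.
Proof.
rewrite /sqnorm => /eqP; rewrite psumr_eq0 => [/allP H|k _]; last first.
  by rewrite exprn_ge0.
apply/matrixP => k l; rewrite (ord1 l) mxE.
have := H k (mem_index_enum k); rewrite /= sqrf_eq0 normr_eq0.
by move/eqP.
Qed.

Lemma unit_pres d (U : 'M[C]_d) (u w : 'cV[C]_d) : unitary U ->
  adj (U *m u) *m (U *m w) = adj u *m w.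
Proof. by move=> hU; rewrite adj_mul mulmxA -(mulmxA (adj u)) unitaryK // mulmx1. Qed.

Lemma proj_fix d (P0 P1 : 'M[C]_d) (b : bool) (psi : 'cV[C]_d) :
  proj_meas P0 P1 -> sqnorm psi = 1 ->
  sqnorm ((if b then P1 else P0) *m psi) = 1 ->
  (if b then P1 else P0) *m psi = psi.
Proof.
move=> [hS h0 h1 a0 a1] hpsi hb.
have key : forall P : 'M[C]_d, P *m P = P -> adj P = P ->
    sqnorm (P *m psi) = (adj psi *m P *m psi) 0 0.
  by move=> P hPP hA; rewrite sqnormE adj_mul hA -mulmxA (mulmxA P) hPP mulmxA.
have hsum : sqnorm (P0 *m psi) + sqnorm (P1 *m psi) = 1.
  have : (adj psi *m (P0 + P1) *m psi) 0 0 = 1 by rewrite hS mulmx1 -sqnormE.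
  by rewrite mulmxDr mulmxDl mxE (key P0) // (key P1).
have hz : sqnorm ((if b then P0 else P1) *m psi) = 0.
  case: b hb hsum => -> h.
    by rewrite -[LHS](addrK 1) h subrr.
  by rewrite -[LHS](addKr 1) h addNr.
have := sqnorm0 hz => hz0.
have : (P0 + P1) *m psi = psi by rewrite hS mul1mx.
by rewrite mulmxDl; case: b hz0 {hb hz} => -> ; rewrite ?addr0 ?add0r.
Qed.

Definition sg n m (x : bits n) (k : 'I_(qdim n m)) : C :=
  if unlift ord0 (enum_val k : QIdx n m).1 is Some j then (-1) ^+ (x j) else 1.

Lemma sg_conj n m (x : bits n) (k : 'I_(qdim n m)) : (sg x k)^* = sg x k.
Proof. by rewrite /sg; case: unlift => [j|]; rewrite ?rmorphXn ?rmorphN1 ?rmorph1. Qed.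

Lemma sg_sq n m (x : bits n) (k : 'I_(qdim n m)) : sg x k * sg x k = 1.
Proof. rewrite /sg; case: unlift => [j|]; last by rewrite mulr1. by case: (x j); rewrite /= ?expr0 ?expr1 ?mulr1 ?mulN1r ?opprK. Qed.

Lemma gram_oracle n m (x y : bits n) (v : 'cV[C]_(qdim n m)) :
  (adj (oracle m x *m v) *m (oracle m y *m v)) 0 0 =
  \sum_k `|v k 0| ^+ 2 * (sg x k * sg y k).
Proof.
rewrite !mxE; apply: eq_bigr => k _.
rewrite /adj /oracle !mul_diag_mx !mxE.
rewrite -/(sg x k) -/(sg y k).
rewrite rmorphM /= sg_conj normCK.
by rewrite mulrACA mulrC [_^* * _]mulrC.
Qed.

Lemma quantum_orth n (D : {set bits n}) (f : bits n -> bool) :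
  exact_1query D f -> exists m (v : 'cV[C]_(qdim n m)),
  \sum_k `|v k 0| ^+ 2 = 1 /\
  forall x y, x \in D -> y \in D -> f x != f y ->
    \sum_k `|v k 0| ^+ 2 * (sg x k * sg y k) = 0.
Proof.
move=> [m [psi0 [U0 [U1 [P0 [P1 [hpsi hU0 hU1 hP Hx]]]]]]].
set v := U0 *m psi0.
have hv : \sum_k `|v k 0| ^+ 2 = 1.
  by rewrite -[LHS]/(sqnorm v) sqnormE unit_pres // -sqnormE.
exists m, v; split => // x y xD yD fxy.
have hO : forall z, sqnorm (U1 *m (oracle m z *m v)) = 1.
  move=> z; rewrite sqnormE unit_pres // gram_oracle -[RHS]hv.
  by apply: eq_bigr => k _; rewrite sg_sq mulr1.
have fix1 : forall z, z \in D -> (if f z then P1 else P0) *m (U1 *m (oracle m z *m v)) = U1 *m (oracle m z *m v).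
  by move=> z zD; apply: proj_fix => //; apply: Hx.
rewrite -gram_oracle -(unit_pres _ _ hU1) -(fix1 x xD) -(fix1 y yD).
case: hP => hS h0 h1 a0 a1.
have h01 : P0 *m P1 = 0.
  have -> : P1 = 1%:M - P0 by rewrite -hS addrC addKr.
  by rewrite mulmxBr mulmx1 h0 subrr.
have h10 : P1 *m P0 = 0.
  have -> : P1 = 1%:M - P0 by rewrite -hS addrC addKr.
  by rewrite mulmxBl mul1mx h0 subrr.
rewrite adj_mul mulmxA -(mulmxA _ _ (if f y then _ else _)).
by case: (f x) (f y) fxy => [] [] //= _; rewrite ?a0 ?a1 ?h01 ?h10 mulmx0 mul0mx mxE.
Qed.

Definition hit n m (k : 'I_(qdim n m)) (j : 'I_n) : C :=
  (((enum_val k : QIdx n m).1 == lift ord0 j) : nat)%:R.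

Lemma sum_delta (R : nmodType) n (j0 : 'I_n) (F : 'I_n -> R) :
  \sum_j (if j == j0 then F j else 0) = F j0.
Proof. by rewrite -big_mkcond big_pred1_eq. Qed.

Lemma sg_prod n m (x y : bits n) (k : 'I_(qdim n m)) :
  sg x k * sg y k = 1 - 2 * \sum_j ((x j != y j) : nat)%:R * hit k j.
Proof.
rewrite /sg /hit; case: unliftP => [j0 -> | ->].
  rewrite (eq_bigr (fun j => if j == j0 then ((x j != y j) : nat)%:R else 0)); last first.
    move=> j _; rewrite (inj_eq lift_inj) (eq_sym j0).
    by case: (j == j0); rewrite ?mulr1 ?mulr0.
  rewrite sum_delta.
  case: (x j0); case: (y j0); rewrite ?expr0 ?expr1 ?eqxx /= ?mulr0 ?mulr1 ?subr0 ?mulN1r ?opprK ?mul1r //; by rewrite mulr2n opprD addrA subrr add0r.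
rewrite big1 ?mulr0 ?subr0 ?mulr1 // => j _.
by rewrite eq_sym (negbTE (neq_lift _ _)) mulr0.
Qed.

Definition Wt n m (v : 'cV[C]_(qdim n m)) (j : 'I_n) : C :=
  \sum_k `|v k 0| ^+ 2 * hit k j.

Lemma dotE n m (v : 'cV[C]_(qdim n m)) (x y : bits n) :
  \sum_k `|v k 0| ^+ 2 * (sg x k * sg y k) =
  \sum_k `|v k 0| ^+ 2 - 2 * \sum_j ((x j != y j) : nat)%:R * Wt v j.
Proof.
under eq_bigr => k _ do rewrite sg_prod mulrBr mulr1.
rewrite sumrB; congr (_ - _).
transitivity (2 * \sum_k \sum_j `|v k 0| ^+ 2 * (((x j != y j) : nat)%:R * hit k j)).
  rewrite mulr_sumr; apply: eq_bigr => k _; rewrite mulrCA.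
  by apply: (congr1 (GRing.mul 2)); rewrite mulr_sumr.
apply: (congr1 (GRing.mul 2)); rewrite exchange_big; apply: eq_bigr => j _.
rewrite /Wt mulr_sumr; apply: eq_bigr => k _; by rewrite mulrCA.
Qed.

Lemma sumW n m (v : 'cV[C]_(qdim n m)) :
  \sum_j Wt v j <= \sum_k `|v k 0| ^+ 2.
Proof.
rewrite /Wt exchange_big /=; apply: ler_sum => k _.
have -> : \sum_(i < n) `|v k 0| ^+ 2 * hit k i = `|v k 0| ^+ 2 * \sum_(i < n) hit k i by rewrite mulr_sumr.
rewrite -{2}[`|v k 0| ^+ 2]mulr1.
apply: ler_wpM2l; first by rewrite exprn_ge0.
rewrite /hit; case: (unliftP ord0 (enum_val k).1) => [j0 -> | ->].
  rewrite (eq_bigr (fun j => if j == j0 then 1 else 0)) ?sum_delta // => j _.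
  by rewrite (inj_eq lift_inj) (eq_sym j0); case: (j == j0).
by rewrite big1 // => j _; rewrite eq_sym (negbTE (neq_lift _ _)).
Qed.

Lemma sum_delta_c (R : nmodType) n (j0 : 'I_n) (a : R) :
  \sum_(j < n) (if j == j0 then a else 0) = a.
Proof. exact: (sum_delta j0 (fun _ => a)). Qed.

Lemma sum2 d (ka kb : 'I_d) (F : 'I_d -> C) : ka != kb ->
  (forall k, k != ka -> k != kb -> F k = 0) -> \sum_k F k = F ka + F kb.
Proof.
move=> hab hF.
rewrite (eq_bigr (fun k => (if k == ka then F ka else 0) + (if k == kb then F kb else 0))).
  by rewrite big_split !sum_delta_c.
move=> k _; case: (eqVneq k ka) => [->|h1]; first by rewrite (negbTE hab) addr0.
case: (eqVneq k kb) => [->|h2]; first by rewrite add0r.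
by rewrite hF // addr0.
Qed.

Lemma adj_sym d (M : 'M[C]_d) : (forall k l, (M l k)^* = M k l) -> adj M = M.
Proof. by move=> h; apply/matrixP => k l; rewrite /adj !mxE /= h. Qed.

Lemma conj_natdiv (a : nat) : ((a%:R / 2 : C)^*) = a%:R / 2.
Proof. by rewrite rmorphM fmorphV !rmorph_nat. Qed.

Lemma conj_nat (a : nat) : ((a%:R : C)^*) = a%:R.
Proof. by rewrite rmorph_nat. Qed.

Lemma alg_ok n (D : {set bits n}) (f : bits n -> bool) (ka kb : 'I_(qdim n 1)) (b : bool) :
  ka != kb ->
  (forall x, x \in D -> exists al be : bool,
     [/\ sg x ka = (-1) ^+ al, sg x kb = (-1) ^+ be & f x = al (+) be (+) b]) ->
  exact_1query D f.
Proof.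
move=> hab Hx.
pose r : C := sqrtC (2^-1).
have r0 : 0 <= r by rewrite sqrtC_ge0 invr_ge0 ler0n.
have rr : r * r = 2^-1 by rewrite -expr2 sqrtCK.
have rc : r^* = r by rewrite geC0_conj.
clearbody r.
pose ind (k : 'I_(qdim n 1)) : nat := ((k == ka) + (k == kb))%N.
have indE : forall k, k != ka -> k != kb -> ind k = 0%N.
  by move=> k h1 h2; rewrite /ind (negbTE h1) (negbTE h2).
have inda : ind ka = 1%N by rewrite /ind eqxx (negbTE hab).
have indb : ind kb = 1%N by rewrite /ind eqxx eq_sym (negbTE hab).
pose psi0 : 'cV[C]_(qdim n 1) := \col_k (r * (ind k)%:R).
pose Q : 'M[C]_(qdim n 1) := \matrix_(k, l) ((ind k * ind l)%:R / 2).
pose Pb (t : bool) := if t == b then Q else 1%:M - Q.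
have two0 : (2 : C) != 0 by rewrite pnatr_eq0.
have QQ : Q *m Q = Q.
  apply/matrixP => k l; rewrite !mxE (sum2 hab) => [|j h1 h2]; last first.
    by rewrite !mxE (indE _ h1 h2) muln0 mul0n mulr0n !mul0r.
  rewrite /Q !mxE inda indb muln1 mul1n !natrM; by field.
have adjQ : adj Q = Q.
  by apply: adj_sym => k l; rewrite /Q !mxE /= conj_natdiv mulnC.
have Q1 : (1%:M - Q) *m (1%:M - Q) = 1%:M - Q.
  by rewrite mulmxBl mul1mx mulmxBr mulmx1 QQ subrr subr0.
have adj1 : adj (1%:M : 'M[C]_(qdim n 1)) = 1%:M.
  by apply: adj_sym => k l; rewrite !mxE /= conj_nat eq_sym.
have adjQ1 : adj (1%:M - Q) = 1%:M - Q.
  by rewrite /adj map_mxB linearB /= -/(adj 1%:M) -/(adj Q) adj1 adjQ.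
exists 1%N, psi0, 1%:M, 1%:M, (Pb false), (Pb true); split.
- rewrite /sqnorm (sum2 hab) => [|k h1 h2]; last by rewrite mxE indE // mulr0 normr0 expr0n.
  rewrite !mxE inda indb mulr1 ger0_norm // expr2 rr; by field.
- by rewrite /unitary adj1 mulmx1.
- by rewrite /unitary adj1 mulmx1.
- have PP : forall t, Pb t *m Pb t = Pb t by move=> t; rewrite /Pb; case: (t == b).
  have PA : forall t, adj (Pb t) = Pb t by move=> t; rewrite /Pb; case: (t == b).
  split => //; rewrite /Pb.
  have -> : (true == b) = ~~ (false == b) by case: b {Pb PP PA Hx}.
  case: (false == b) => /=; first by rewrite addrC subrK.
  by rewrite subrK.
move=> x xD; have [al [be [ha hb' hf]]] := Hx x xD.
rewrite !mul1mx.
set phi := oracle 1 x *m psi0.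
have phiE : forall k, phi k 0 = sg x k * (r * (ind k)%:R).
  by move=> k; rewrite /phi /oracle mul_diag_mx !mxE.
have phi0 : forall k, k != ka -> k != kb -> phi k 0 = 0.
  by move=> k h1 h2; rewrite phiE indE // mulr0 mulr0.
have norm1 : sqnorm phi = 1.
  rewrite /sqnorm (sum2 hab) => [|k h1 h2]; last by rewrite phi0 // normr0 expr0n.
  rewrite !phiE ha hb' inda indb mulr1 !normrM !normr_sign !mul1r ger0_norm // expr2 rr; by field.
have Qphi : Q *m phi = if al == be then phi else 0.
  apply/matrixP => k l; rewrite (ord1 l) !mxE (sum2 hab) => [|j h1 h2]; last by rewrite phi0 // mulr0.
  rewrite !phiE /Q !mxE ha hb' inda indb !muln1.
  case: (eqVneq al be) => [e|hne].
    subst be; rewrite ?eqxx.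
    case: (eqVneq k ka) => [->|h1].
      by rewrite phiE ha inda; field.
    case: (eqVneq k kb) => [->|h2].
      by rewrite phiE hb' indb; field.
    by rewrite phiE indE //; field.
  rewrite mxE.
  have -> : be = ~~ al by move: hne; clear - al be; case: al; case: be.
  move: (ind k)%:R => c; clear - al r; by case: al; rewrite ?expr0 ?expr1; field.
have -> : (if f x then Pb true else Pb false) = Pb (f x) by case: (f x).
rewrite /Pb hf.
have xorE : forall a c d : bool, (a (+) c (+) d == d) = (a == c) by do 3 case.
rewrite xorE.
case: (al == be) Qphi => Qphi; first by rewrite Qphi.
by rewrite mulmxBl mul1mx Qphi subr0.
Qed.

Lemma xb_ord n (x : bits n) (i : 'I_n) : xb x i = x i.
Proof. by rewrite /xb valK. Qed.

Lemma diff_coord n (x y : bits n) (i : 'I_n) :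
  (forall j, j != i -> x j = y j) -> x != y -> x i != y i.
Proof.
move=> h hne; apply/negP => /eqP e; move/eqP: hne; apply.
by apply/ffunP => j; case: (eqVneq j i) => [->|/h].
Qed.

Lemma three_le (T : finType) (D : {set T}) a b e :
  a \in D -> b \in D -> e \in D -> a != b -> e \notin [set a; b] -> (3 <= #|D|)%N.
Proof.
move=> aD bD eD hab he.
have : [set e; a; b] \subset D.
  by apply/subsetP => z; rewrite !inE => /orP [/orP [] | ] /eqP ->.
move/subset_leq_card; rewrite -setUA cardsU1 he cards2 hab; by [].
Qed.

Lemma only_if n (D : {set bits n}) (f : bits n -> bool) :
  (0 < n)%N -> depends_on_bits D f n -> exact_1query D f ->
     (n = 1%N /\ D = [set: bits n] /\
        ((forall x, f x = xb x 0) \/ (forall x, f x = ~~ xb x 0)))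
   \/
     (n = 2%N /\ (#|D| = 3%N \/ #|D| = 4%N) /\
        ((forall x, x \in D -> f x = xb x 0 (+) xb x 1) \/
         (forall x, x \in D -> f x = ~~ (xb x 0 (+) xb x 1)))).
Proof.
move=> n0 Hdep /quantum_orth [m [v [hv Horth]]].
have Hpair := dep_pair Hdep.
have Hneq : forall x y, f x != f y -> x != y.
  by move=> x y; apply: contra => /eqP ->.
have HW : forall i, 2 * Wt v i = 1.
  move=> i; have [x [y [xD yD hxy fxy]]] := Hpair i.
  have := Horth x y xD yD fxy; rewrite dotE hv.
  have -> : \sum_j ((x j != y j) : nat)%:R * Wt v j = Wt v i.
    rewrite (eq_bigr (fun j => if j == i then Wt v j else 0)) ?sum_delta // => j _.
    case: (eqVneq j i) => [->|hji]; last by rewrite hxy // eqxx mul0r.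
    by rewrite (diff_coord hxy (Hneq _ _ fxy)) mul1r.
  by move/eqP; rewrite subr_eq0 => /eqP <-.
have Hham : forall x y, x \in D -> y \in D -> f x != f y ->
    (\sum_j ((x j != y j) : nat))%N = 1%N.
  move=> x y xD yD fxy; have := Horth x y xD yD fxy; rewrite dotE hv.
  rewrite mulr_sumr (eq_bigr (fun j => ((x j != y j) : nat)%:R)); last first.
    by move=> j _; rewrite mulrCA HW mulr1.
  rewrite -natr_sum => /eqP; rewrite subr_eq0 => /eqP h; apply/eqP; rewrite -(eqr_nat C) -h //.
have Hn2 : (n <= 2)%N.
  have := sumW v; rewrite hv => hs.
  have h2 : 2 * \sum_j Wt v j = n%:R.
    by rewrite mulr_sumr (eq_bigr (fun _ => 1)) // sumr_const card_ord.
  rewrite -(ler_nat C) -h2 -[X in _ <= X]mulr1.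
  by rewrite ler_wpM2l // ler0n.
have : n = 1%N \/ n = 2%N by lia.
case=> hn; [left|right]; subst n.
- have [x [y [xD yD _ fxy]]] := Hpair ord0.
  have Hxy : x ord0 != y ord0.
    apply: (diff_coord (i := ord0)) (Hneq _ _ fxy) => j; by rewrite (ord1 j) eqxx.
  have bl : forall a b c : bool, a != b -> b != c -> a = c by do 3 case.
  have Hz : forall z : bits 1, z = x \/ z = y.
    move=> z; case: (eqVneq (z ord0) (x ord0)) => e; [left|right];
      apply/ffunP => i; rewrite (ord1 i) //; exact: bl e Hxy.
  split; first by [].
  split.
    by apply/setP => z; rewrite inE; case: (Hz z) => ->.
  have bl2 : forall fx fy x0 y0 : bool, fx != fy -> x0 != y0 ->
      fy = y0 (+) (fx (+) x0) /\ fx = x0 (+) (fx (+) x0) by do 4 case.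
  have Hf : forall z, f z = z ord0 (+) (f x (+) x ord0).
    move=> z; have [h1 h2] := bl2 _ _ _ _ fxy Hxy.
    by case: (Hz z) => ->.
  move: Hf; case: (f x (+) x ord0) => Hf; [right|left] => z;
    by rewrite Hf (xb_ord z ord0) ?addbT ?addbF.
- pose o1 : 'I_2 := lift ord0 ord0.
  have [a [b [aD bD hab fab]]] := Hpair ord0.
  have [c [d [cD dD hcd fcd]]] := Hpair o1.
  have sum2E : forall x y : bits 2,
      (\sum_j ((x j != y j) : nat))%N = ((x ord0 != y ord0) + (x o1 != y o1))%N.
    by move=> x y; rewrite big_ord_recl big_ord1.
  have Hab0 := diff_coord hab (Hneq _ _ fab).
  have Hcd1 := diff_coord hcd (Hneq _ _ fcd).
  have bpar : forall a0 a1 b0 c0 c1 : bool, True by [].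
  have Hpar : forall x y, x \in D -> y \in D ->
      x ord0 (+) x o1 = y ord0 (+) y o1 -> f x = f y.
    move=> x y xD yD hp; apply/eqP; case: (boolP (f x == f y)) => // fxy.
    have := Hham x y xD yD fxy; rewrite sum2E; move: hp.
    have bl : forall p q r t : bool, p (+) q = r (+) t -> ((p != r) + (q != t))%N = 1%N -> false.
      by do 4 case.
    by move/bl => h /h.
  have hab1 : a o1 = b o1 by apply: hab.
  have bl3 : forall fa fb fz a0 a1 b0 z0 z1 : bool, fa != fb -> a0 != b0 ->
      (z0 (+) z1 = a0 (+) a1 -> fz = fa) -> (z0 (+) z1 = b0 (+) a1 -> fz = fb) ->
      fz = z0 (+) z1 (+) (fa (+) (a0 (+) a1)) by do 8 case => //=; auto.
  have Hf : forall z, z \in D -> f z = z ord0 (+) z o1 (+) (f a (+) (a ord0 (+) a o1)).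
    move=> z zD; apply: (bl3 _ (f b) _ _ _ (b ord0)) => //.
    - by move=> h; apply: Hpar.
    - by move=> h; apply: Hpar => //; rewrite h hab1.
  split; first by [].
  split.
    have le4 : (#|D| <= 4)%N.
      by have := max_card D; rewrite card_ffun card_bool card_ord.
    have Hne : a != b by apply: contraNneq Hab0 => ->.
    suff h3 : (3 <= #|D|)%N.
      move: le4; rewrite leq_eqVlt => /orP [/eqP ->|h4]; [by right|left].
      by apply/eqP; rewrite eqn_leq -ltnS h4 h3.
    case: (boolP (c \in [set a; b])) => hc; last exact: three_le aD bD cD Hne hc.
    case: (boolP (d \in [set a; b])) => hd; last exact: three_le aD bD dD Hne hd.
    exfalso; move: Hcd1; rewrite !inE in hc hd.
    by case/orP: hc => /eqP ->; case/orP: hd => /eqP ->; rewrite ?eqxx // hab1 eqxx.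
  move: Hf; case: (f a (+) (a ord0 (+) a o1)) => Hf; [right|left] => z zD;
    by rewrite Hf // (xb_ord z ord0) (xb_ord z o1) ?addbT ?addbF.
Qed.

Lemma if_part n (D : {set bits n}) (f : bits n -> bool) :
     (n = 1%N /\ D = [set: bits n] /\
        ((forall x, f x = xb x 0) \/ (forall x, f x = ~~ xb x 0)))
   \/
     (n = 2%N /\ (#|D| = 3%N \/ #|D| = 4%N) /\
        ((forall x, x \in D -> f x = xb x 0 (+) xb x 1) \/
         (forall x, x \in D -> f x = ~~ (xb x 0 (+) xb x 1)))) ->
  exact_1query D f.
Proof.
case=> [[hn [_ hf]] | [hn [_ hf]]]; subst n.
- pose ka : 'I_(qdim 1 1) := enum_rank ((ord0 : 'I_2), (ord0 : 'I_1)).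
  pose kb : 'I_(qdim 1 1) := enum_rank ((lift ord0 ord0 : 'I_2), (ord0 : 'I_1)).
  have hk : ka != kb.
    by rewrite /ka /kb (inj_eq enum_rank_inj) xpair_eqE (negbTE (neq_lift _ _)).
  have sa : forall x : bits 1, sg x ka = 1 by move=> x; rewrite /sg /ka enum_rankK /= unlift_none.
  have sb : forall x : bits 1, sg x kb = (-1) ^+ (x ord0).
    by move=> x; rewrite /sg /kb enum_rankK /= liftK.
  case: hf => hf.
  + apply: (alg_ok (b := false) hk) => x _; exists false, (x ord0).
    by rewrite sa sb hf (xb_ord x ord0) addbF.
  + apply: (alg_ok (b := true) hk) => x _; exists false, (x ord0).
    by rewrite sa sb hf (xb_ord x ord0) addbT.
- pose o1 : 'I_2 := lift ord0 ord0.
  pose ka : 'I_(qdim 2 1) := enum_rank ((lift ord0 ord0 : 'I_3), (ord0 : 'I_1)).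
  pose kb : 'I_(qdim 2 1) := enum_rank ((lift ord0 o1 : 'I_3), (ord0 : 'I_1)).
  have hk : ka != kb.
    by rewrite /ka /kb (inj_eq enum_rank_inj) xpair_eqE (inj_eq lift_inj).
  have sa : forall x : bits 2, sg x ka = (-1) ^+ (x ord0).
    by move=> x; rewrite /sg /ka enum_rankK /= liftK.
  have sb : forall x : bits 2, sg x kb = (-1) ^+ (x o1).
    by move=> x; rewrite /sg /kb enum_rankK /= liftK.
  case: hf => hf.
  + apply: (alg_ok (b := false) hk) => x xD; exists (x ord0), (x o1).
    by rewrite sa sb hf // (xb_ord x ord0) (xb_ord x o1) addbF.
  + apply: (alg_ok (b := true) hk) => x xD; exists (x ord0), (x o1).
    by rewrite sa sb hf // (xb_ord x ord0) (xb_ord x o1) addbT.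
Qed.

Theorem theorem2 (n : nat) (D : {set bits n}) (f : bits n -> bool) :
  (0 < n)%N ->
  depends_on_bits D f n ->
  (exact_1query D f <->
     (n = 1%N /\ D = [set: bits n] /\
        ((forall x, f x = xb x 0) \/ (forall x, f x = ~~ xb x 0)))
   \/
     (n = 2%N /\ (#|D| = 3%N \/ #|D| = 4%N) /\
        ((forall x, x \in D -> f x = xb x 0 (+) xb x 1) \/
         (forall x, x \in D -> f x = ~~ (xb x 0 (+) xb x 1))))).
Proof.
move=> n0 Hdep; split; first exact: only_if.
exact: if_part.
Qed.
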